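(* Let $C$ be a linear code over $\mathbb{Z}_4$ of length $n$ and type $4^{k_1}2^{k_2}$, with generator matrix $G\in\mathbb{Z}_4^{(k_1+k_2)\times n}$. If no column of $G$ lies in $(2\mathbb{Z}_4)^{k_1+k_2}$, then $$\sum_{\mathbf{x}\in(2\mathbb{Z}_4)^{k_1+k_2}\setminus\{\mathbf{0}\}}w_L(\mathbf{x}G)=2^{k_1+k_2}n.$$
   Context: A linear code of length $n$ over $\mathbb{Z}_4$ is a $\mathbb{Z}_4$-submodule of $\mathbb{Z}_4^n$, of type $4^{k_1}2^{k_2}$ if isomorphic to $\mathbb{Z}_4^{k_1}\times\mathbb{Z}_2^{k_2}$. A generator matrix is a matrix whose rows generate the code and no proper subset of whose rows does. $2\mathbb{Z}_4=\{0,2\}$. Lee weight: $w_L(0)=0,w_L(1)=1,w_L(2)=2,w_L(3)=1$, additive on vectors. *)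

(* Defs.v *)
From HB Require Import structures.
From mathcomp Require Import all_boot all_order all_algebra.
Set Implicit Arguments. Unset Strict Implicit. Unset Printing Implicit Defensive.
Import GRing.Theory.
Local Open Scope ring_scope.

Definition twoZ4 : {set 'Z_4} := [set 0; 2%:R].

Definition lee_wt (x : 'Z_4) : nat :=
  match nat_of_ord x with 0 => 0 | 1 => 1 | 2 => 2 | _ => 1 end%N.

Definition lee_weight n (v : 'rV['Z_4]_n) : nat := (\sum_(j < n) lee_wt (v ord0 j))%N.

Definition is_Z4_linear_code n (C : {set 'rV['Z_4]_n}) : Prop :=
  0 \in C /\ (forall u v, u \in C -> v \in C -> u + v \in C)
  /\ (forall (a : 'Z_4) u, u \in C -> a *: u \in C).

(* C has type 4^k1 2^k2: C is isomorphic (as a Z_4-module, equivalently as an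
   abelian group) to Z_4^k1 x Z_2^k2. *)
Definition has_type n (C : {set 'rV['Z_4]_n}) (k1 k2 : nat) : Prop :=
  exists f : 'rV['Z_4]_k1 * 'rV['Z_2]_k2 -> 'rV['Z_4]_n,
    [/\ forall x y, f (x + y) = f x + f y,
        injective f &
        forall v, (v \in C) <-> (exists x, v = f x)].

Definition row_span m n (G : 'M['Z_4]_(m, n)) (S : {set 'I_m}) : {set 'rV['Z_4]_n} :=
  [set a *m G | a in [set a : 'rV['Z_4]_m | [forall j, (j \notin S) ==> (a ord0 j == 0)]]].

Definition is_generator_matrix m n (G : 'M['Z_4]_(m, n)) (C : {set 'rV['Z_4]_n}) : Prop :=
  row_span G setT = C /\ (forall S : {set 'I_m}, S \proper setT -> row_span G S != C).

(* Main.v *)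
Require Import Defs.
From HB Require Import structures.
From mathcomp Require Import all_boot all_order all_algebra.
From mathcomp Require Import zify.
Import GRing.Theory.
Local Open Scope ring_scope.
Lemma keyZ4 (c : bool) (g u : 'Z_4) : g \notin twoZ4 ->
  (lee_wt (2%:R * ((c%:R) * g + u))%R + lee_wt (2%:R * (((~~c)%:R) * g + u))%R = 2)%N.
Proof.
case: c; case: g => [[|[|[|[|?]]]] ?] //; case: u => [[|[|[|[|?]]]] ?] //; rewrite !inE; vm_compute; by [].
Qed.
Lemma invZ4a (a : 'Z_4) : a \in twoZ4 -> 2%:R * ((a == 2%:R :> 'Z_4)%:R) = a.
Proof. case: a => [[|[|[|[|?]]]] ?] //; rewrite !inE; vm_compute; try by []; by move=> _; apply/val_inj. Qed.
Lemma invZ4b (c : bool) : (2%:R * (c%:R) == 2%:R :> 'Z_4) = c.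
Proof. by case: c; vm_compute. Qed.
Lemma twoZ4r (c : bool) : (2%:R * (c%:R) : 'Z_4) \in twoZ4.
Proof. by case: c; rewrite !inE; vm_compute. Qed.

Theorem corollary3p6 (n k1 k2 : nat) (C : {set 'rV['Z_4]_n})
  (G : 'M['Z_4]_(k1 + k2, n)) :
  is_Z4_linear_code C ->
  has_type C k1 k2 ->
  is_generator_matrix G C ->
  (forall j : 'I_n, exists i : 'I_(k1 + k2), G i j \notin twoZ4) ->
  (\sum_(x : 'rV['Z_4]_(k1 + k2) | (x != 0 :> 'rV['Z_4]_(k1 + k2))%R && [forall i, x ord0 i \in twoZ4])
      lee_weight (x *m G))%N = (2 ^ (k1 + k2) * n)%N.
Proof.
move=> _ _ _ Hcol.
pose P := fun x : 'rV['Z_4]_(k1+k2) => [forall i, x ord0 i \in twoZ4].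
have -> : \sum_(x | (x != 0) && P x) lee_weight (x *m G) = (\sum_(x | P x) lee_weight (x *m G))%N.
  rewrite [RHS](bigD1 0) /=; last by apply/forallP=> i; rewrite mxE !inE eqxx.
  have z : (\sum_(j<n) lee_wt ((0%R:'rV['Z_4]_n) ord0 j) = 0)%N by rewrite big1 // => j _; rewrite mxE.
  rewrite mul0mx /lee_weight z add0n.
  by apply: eq_bigl => x; rewrite andbC.
pose r (b : {ffun 'I_(k1+k2) -> bool}) : 'rV['Z_4]_(k1+k2) := \row_i (2%:R * (b i)%:R).
pose ri (x : 'rV['Z_4]_(k1+k2)) : {ffun 'I_(k1+k2) -> bool} := [ffun i => x ord0 i == 2%:R].
rewrite (reindex r) /=; last first.
  exists ri => x Px.
    by apply/ffunP=> i; rewrite ffunE mxE invZ4b.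
  apply/rowP=> i; rewrite mxE ffunE; apply: invZ4a.
  by move: Px; rewrite /P inE => /forallP.
rewrite (eq_bigl (fun _ => true)); last first.
  by move=> b; apply/forallP=> i; rewrite mxE twoZ4r.
rewrite /lee_weight exchange_big.
rewrite (eq_bigr (fun _ : 'I_n => 2 ^ (k1 + k2))%N); first by rewrite sum_nat_const card_ord mulnC.
move=> j _.
have [i0 Hi0] := Hcol j.
pose t (b : {ffun 'I_(k1+k2) -> bool}) : {ffun 'I_(k1+k2) -> bool} :=
  [ffun i => if i == i0 then ~~ b i else b i].
have tK : involutive t.
  by move=> b; apply/ffunP=> i; rewrite !ffunE; case: eqP => // _; rewrite negbK.
pose f b := lee_wt ((r b *m G) ord0 j).
have Hv : forall b, (r b *m G) ord0 j =
    2%:R * ((b i0)%:R * G i0 j + \sum_(i | i != i0) (b i)%:R * G i j).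
  move=> b; rewrite mxE (bigD1 i0) //= mulrDr mulr_sumr mxE mulrA; congr (_ + _).
  by apply: eq_bigr => i _; rewrite mxE mulrA.
have Hf : forall b, (f b + f (t b) = 2)%N.
  move=> b; rewrite /f !Hv ffunE eqxx.
  have -> : \sum_(i | i != i0) ((t b i)%:R * G i j) = \sum_(i | i != i0) ((b i)%:R * G i j).
    by apply: eq_bigr => i Hi; rewrite ffunE (negbTE Hi).
  exact: keyZ4.
have Ht : (\sum_b f (t b) = \sum_b f b)%N.
  by rewrite [RHS](reindex_inj (inv_inj tK)).
have : (\sum_b f b + \sum_b f b = 2 ^ (k1 + k2) * 2)%N.
  rewrite -{2}Ht -big_split /= (eq_bigr (fun _ => 2%N)) ?sum_nat_const; last by move=> b _; exact: Hf.
  by rewrite card_ffun card_bool card_ord.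
move=> H; have Hs : (\sum_b f b = 2 ^ (k1 + k2))%N by lia.
exact: Hs.
Qed.
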